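(* Let $m\geq 3$ be an integer and let $\{X_n\}_{n\in\mathbb{N}}$ be a sequence of finite connected $2$-connected graphs such that, for each $n$, the number of maximal spanning trees of $X_n$ not containing a given edge $e$ is the same for all edges $e$ of $X_n$. Let $\widetilde{X}_n$ be the $\mathbb{Z}_m$-homology cover of $X_n$, equipped with its graph metric. If $\mathrm{girth}(X_n)\to\infty$ as $n\to\infty$, then the coarse disjoint union $\bigsqcup_n\widetilde{X}_n$ coarsely embeds into Hilbert space.
   Context: A graph is $2$-connected if removing any single edge leaves it connected. The girth of a graph is the length of its shortest cycle. $\mathbb{Z}_m$-homology cover: let $X$ be a finite connected graph with a chosen orientation of each edge, let $T$ be a maximal spanning tree, and let $e_1,\dots,e_r$ be the edges not in $T$, which correspond to a free basis of $\pi_1(X)$. Let $K=\pi_1(X)/[\pi_1(X),\pi_1(X)]\pi_1(X)^m\cong\oplus^r\mathbb{Z}_m$ and $\rho:\pi_1(X)\to K$ the quotient map. The cover $\widetilde{X}$ has vertex set $V(X)\times K$ and edge set $E(X)\times K$; if $e\in T$ goes from $v$ to $w$, the edge $(e,k)$ joins $(v,k)$ and $(w,k)$; if $e\notin T$ goes from $v$ to $w$, then $(e,k)$ joins $(v,k)$ and $(w,\rho(e)k)$. Up to isomorphism commuting with the projection $\pi:\widetilde{X}\to X$, $(v,k)\mapsto v$, $(e,k)\mapsto e$, this does not depend on $T$ or the orientations. A coarse embedding is a map $F$ with non-decreasing $\rho_\pm:\mathbb{R}_+\to\mathbb{R}_+$, $\rho_\pm(t)\to\infty$, and $\rho_-(d(x,x'))\le\|F(x)-F(x')\|\le\rho_+(d(x,x'))$.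 The coarse disjoint union of metric spaces $X_n$ is $\bigsqcup_n X_n$ with the metric restricting to the given one on each $X_n$, and distances between distinct components larger than their diameters and tending to infinity. *)

(* Defs.v *)
From HB Require Import structures.
From mathcomp Require Import all_boot all_order all_algebra.
From Stdlib Require Import Reals ClassicalEpsilon.

Set Implicit Arguments.
Unset Strict Implicit.
Unset Printing Implicit Defensive.

Definition pbool (P : Prop) : bool :=
  if excluded_middle_informative P then true else false.

Record graph := Graph {
  gV : finType;
  gE : finType;
  gsrc : gE -> gV;
  gtgt : gE -> gV }.

Section Graphs.
Variable G : graph.

Definition adjF (F : {set gE G}) : rel (gV G) := fun x y =>
  [exists e in F, ((gsrc e == x) && (gtgt e == y)) || ((gsrc e == y) && (gtgt e == x))].

Definition adj : rel (gV G) := adjF setT.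

Definition connected_in (F : {set gE G}) : Prop :=
  (0 < #|gV G|)%N /\ forall x y : gV G, connect (adjF F) x y.

Definition connected : Prop := connected_in setT.

Definition two_connected : Prop := forall e : gE G, connected_in [set~ e].

(* darts: an edge traversed forwards (true) or backwards (false) *)
Definition dstart (a : gE G * bool) : gV G :=
  if a.2 then gsrc a.1 else gtgt a.1.
Definition dend (a : gE G * bool) : gV G :=
  if a.2 then gtgt a.1 else gsrc a.1.

Definition is_cycle (c : seq (gE G * bool)) : Prop :=
  c <> [::] /\ uniq (map fst c) /\ uniq (map dstart c) /\
  path.cycle (fun a b => dend a == dstart b) c.

(* a (maximal) spanning tree: a connected acyclic spanning subgraph *)
Definition spanning_tree (T : {set gE G}) : Prop :=
  connected_in T /\ forall c, is_cycle c -> ~ all (fun a => a.1 \in T) c.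

Definition n_trees_avoiding (e : gE G) : nat :=
  #|[set T : {set gE G} | pbool (spanning_tree T /\ e \notin T)]|.

(* girth(G) >= g : every cycle has length at least g (acyclic: girth = oo) *)
Definition girth_ge (g : nat) : Prop :=
  forall c, is_cycle c -> (g <= size c)%N.

Fixpoint ball (x : gV G) (n : nat) : {set gV G} :=
  match n with
  | 0 => [set x]
  | n'.+1 => ball x n' :|: [set y | [exists z in ball x n', adj z y]]
  end.

(* least n with y in the ball of radius n around x (this is the path metric
   for connected graphs, where every vertex lies within distance < #|V|) *)
Definition gdist (x y : gV G) : nat :=
  find (fun n => y \in ball x n) (iota 0 #|gV G|).

Definition gdiam : nat := \max_(x : gV G) \max_(y : gV G) gdist x y.

End Graphs.

Section Cover.
Variables (m : nat) (G : graph) (T : {set gE G}).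

Definition nontree := {e : gE G | e \notin T}.
Definition coverK := {ffun nontree -> 'Z_m}.

Definition rho (e : gE G) : coverK :=
  [ffun f : nontree => if val f == e then @GRing.one [the pzSemiRingType of 'Z_m] else GRing.zero].

Definition homology_cover : graph :=
  @Graph (gV G * coverK)%type (gE G * coverK)%type
    (fun p => (gsrc p.1, p.2))
    (fun p => (gtgt p.1, if p.1 \in T then p.2 else GRing.add (rho p.1) p.2)).

End Cover.

Open Scope R_scope.

Definition in_l2 (f : nat -> R) : Prop :=
  exists L, infinite_sum (fun i => (f i) ^ 2) L.

Definition l2_dist_is (f g : nat -> R) (r : R) : Prop :=
  exists L, infinite_sum (fun i => (f i - g i) ^ 2) L /\ r = sqrt L.

Definition nondecr (rh : R -> R) : Prop :=
  forall s t, 0 <= s -> s <= t -> rh s <= rh t.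

Definition to_infty (rh : R -> R) : Prop :=
  forall M, exists t0, forall t, t0 <= t -> M <= rh t.

Definition coarse_embeds_l2 (X : Type) (d : X -> X -> R) : Prop :=
  exists (F : X -> nat -> R) (rm rp : R -> R),
    (forall x, in_l2 (F x)) /\
    (forall t, 0 <= t -> 0 <= rm t /\ 0 <= rp t) /\
    nondecr rm /\ nondecr rp /\ to_infty rm /\ to_infty rp /\
    forall x x', exists r, l2_dist_is (F x) (F x') r /\
                           rm (d x x') <= r /\ r <= rp (d x x').

Definition is_metric (X : Type) (d : X -> X -> R) : Prop :=
  (forall x y, 0 <= d x y) /\ (forall x y, d x y = 0 <-> x = y) /\
  (forall x y, d x y = d y x) /\ (forall x y z, d x z <= d x y + d y z).

Definition coarse_disjoint_union_metric (Y : nat -> graph)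
    (d : {n : nat & gV (Y n)} -> {n : nat & gV (Y n)} -> R) : Prop :=
  is_metric d /\
  (forall n (a b : gV (Y n)),
      d (existT _ n a) (existT _ n b) = INR (gdist a b)) /\
  (forall n k (a : gV (Y n)) (b : gV (Y k)), n <> k ->
      INR (gdiam (Y n)) < d (existT _ n a) (existT _ k b) /\
      INR (gdiam (Y k)) < d (existT _ n a) (existT _ k b)) /\
  (forall M, exists N, forall n k (a : gV (Y n)) (b : gV (Y k)),
      n <> k -> (N <= n + k)%nat -> M <= d (existT _ n a) (existT _ k b)).

Close Scope R_scope.

(* Main.v *)
Require Import Defs.
From HB Require Import structures.
From mathcomp Require Import all_boot all_order all_algebra.
From Stdlib Require Import Reals.
Module Part1.
From HB Require Import structures.
From mathcomp Require Import all_boot all_order all_algebra.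
From Stdlib Require Import Reals Lia.
From mathcomp Require Import zify.

Set Implicit Arguments.
Unset Strict Implicit.
Unset Printing Implicit Defensive.
Import GRing.Theory.

Section GraphLemmas.
Variable G : graph.
Implicit Types (u v w x y z : gV G) (e f : gE G) (a b : gE G * bool) (p q : seq (gE G * bool)).

Definition flipd a : gE G * bool := (a.1, ~~ a.2).
Fixpoint walk u p : bool :=
  if p is a :: p' then (dstart a == u) && walk (dend a) p' else true.
Definition verts u p := u :: map (@dend G) p.
Definition lastv u p := last u (map (@dend G) p).
Definition incid e z := (gsrc e == z) || (gtgt e == z).

Lemma incid_dart a z : incid a.1 z -> z = dstart a \/ z = dend a.
Proof. case: a => e [] /=; rewrite /incid /dstart /dend /= => /orP [] /eqP ->; auto. Qed.

Lemma incid_start a : incid a.1 (dstart a).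
Proof. by case: a => e []; rewrite /incid /dstart /= eqxx ?orbT. Qed.
Lemma incid_end a : incid a.1 (dend a).
Proof. by case: a => e []; rewrite /incid /dend /= eqxx ?orbT. Qed.

Lemma EP u p z e : walk u p -> z \notin verts u p -> incid e z -> e \notin map fst p.
Proof.
elim: p u => [//|a p IH] u /= /andP [/eqP hs hw].
rewrite /verts /= in_cons negb_or => /andP [hzu hz] hi.
apply/negP => /orP [/eqP he|].
  subst e; case: (incid_dart hi) => hz'.
    by move: hzu; rewrite hz' hs eqxx.
  by move: hz; rewrite hz' inE eqxx.
by apply/negP; apply: (IH (dend a)).
Qed.

Lemma walk_cat u p q : walk u (p ++ q) = walk u p && walk (lastv u p) q.
Proof. elim: p u => [//|a p IH] u /=. by rewrite IH andbA. Qed.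

Lemma lastv_cat u p q : lastv u (p ++ q) = lastv (lastv u p) q.
Proof. by rewrite /lastv map_cat last_cat. Qed.

Lemma lastv_cons u a p : lastv u (a :: p) = lastv (dend a) p.
Proof. by []. Qed.

Lemma map_dstart u p : walk u p -> rcons (map (@dstart G) p) (lastv u p) = verts u p.
Proof.
elim: p u => [//|a p IH] u /= /andP [/eqP hs hw].
by rewrite hs (IH _ hw).
Qed.

Lemma walk_path a p : walk (dend a) p -> path (fun a b => dend a == dstart b) a p.
Proof.
elim: p a => [//|b p IH] a /= /andP [hs hw].
by rewrite eq_sym hs /= IH.
Qed.

Lemma lastv_last a p : walk (dend a) p -> lastv (dend a) p = dend (last a p).
Proof. by move=> _; rewrite /lastv last_map. Qed.

Lemma cycle_close u p a :
  walk u p -> uniq (verts u p) -> uniq (map fst p) ->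
  dstart a = lastv u p -> dend a = u -> a.1 \notin map fst p ->
  is_cycle (rcons p a).
Proof.
move=> hw hv he hs ht ha; split; first by case: p {hw hv he hs ha}.
split; first by rewrite map_rcons rcons_uniq ha he.
split; first by rewrite map_rcons hs (map_dstart hw).
case: p hw hv he hs ha => [|b p] /=.
  by move=> _ _ _ hs ht'; rewrite /= andbT ht hs.
move=> /andP [/eqP hb hw] _ _ hs _.
rewrite rcons_path rcons_path walk_path //= last_rcons.
by rewrite hs lastv_cons (lastv_last hw) eqxx ht hb eqxx.
Qed.

Lemma lastv_take u p i : i <= size p -> lastv u (take i p) = nth u (verts u p) i.
Proof.
elim: p u i => [|a p IH] u i; first by case: i.
case: i => [|i] hi; first by [].
rewrite /= lastv_cons IH //; apply: set_nth_default; by rewrite /= size_map.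
Qed.

Lemma walk_take u p i : walk u p -> walk u (take i p).
Proof. by rewrite -{1}(cat_take_drop i p) walk_cat => /andP []. Qed.

Lemma verts_take u p i : verts u (take i p) = take i.+1 (verts u p).
Proof. by rewrite /verts map_take. Qed.

Lemma dstart_flip a : dstart (flipd a) = dend a.
Proof. by case: a => e []. Qed.
Lemma dend_flip a : dend (flipd a) = dstart a.
Proof. by case: a => e []. Qed.

Lemma walk_rev u p : walk u p -> walk (lastv u p) (rev (map flipd p)).
Proof.
elim/last_ind: p => [//|p a IH].
rewrite -cats1 walk_cat /= andbT => /andP [hw /eqP ha].
rewrite map_cat rev_cat /= lastv_cat /= dstart_flip eqxx dend_flip ha /=.
exact: IH.
Qed.

Lemma verts_rev u p : walk u p -> verts (lastv u p) (rev (map flipd p)) = rev (verts u p).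
Proof.
elim/last_ind: p => [//|p a IH].
rewrite -cats1 walk_cat /= andbT => /andP [hw /eqP ha].
rewrite map_cat rev_cat /= lastv_cat /=.
rewrite {1}/verts /= dend_flip ha -/(verts _ _) IH //.
rewrite /verts map_cat /= -cat_cons rev_cat /=. by [].
Qed.

Lemma lastv_rev u p : walk u p -> lastv (lastv u p) (rev (map flipd p)) = u.
Proof.
move=> hw; have := verts_rev hw.
rewrite /lastv /verts => h.
have := congr1 (last (lastv u p)) h. rewrite /= => ->.
by rewrite rev_cons last_rcons.
Qed.

Lemma edges_rev p : map fst (rev (map flipd p)) = rev (map fst p).
Proof. by rewrite map_rev -map_comp. Qed.


Definition spath (D : pred (gE G)) u p :=
  [&& walk u p, uniq (verts u p), uniq (map fst p) & all (fun a => D a.1) p].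

Lemma size_verts_le u p : uniq (verts u p) -> size (verts u p) <= #|gV G|.
Proof.
move=> hu; rewrite -(card_uniqP hu); exact: max_card.
Qed.

Lemma spath_rev D u p : spath D u p -> spath D (lastv u p) (rev (map flipd p)).
Proof.
case/and4P => hw hv he ha; apply/and4P; split.
- exact: walk_rev.
- by rewrite verts_rev // rev_uniq.
- by rewrite edges_rev rev_uniq.
- rewrite all_rev all_map; apply: sub_all ha => a /=; by [].
Qed.

Lemma cycle_in_D_absurd (D : pred (gE G)) u p a :
  (forall c, is_cycle c -> all (fun a => D a.1) c -> False) ->
  spath D u p -> dstart a = lastv u p -> dend a = u -> a.1 \notin map fst p -> D a.1 -> False.
Proof.
move=> noC /and4P [hw hv he ha] hs ht hn hD.
apply: (noC _ (cycle_close hw hv he hs ht hn)).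
by rewrite all_rcons hD ha.
Qed.

Section Leaf.
Variable D : pred (gE G).
Hypothesis noC : forall c, is_cycle c -> all (fun a => D a.1) c -> False.

Definition leafD u e := [&& D e, incid e u & [forall f, (D f && incid f u) ==> (f == e)]].

Lemma spath_take u p i : spath D u p -> spath D u (take i p).
Proof.
case/and4P => hw hv he ha; apply/and4P; split.
- exact: walk_take.
- rewrite verts_take; exact: take_uniq.
- rewrite map_take; exact: take_uniq.
- by rewrite -(cat_take_drop i p) all_cat in ha; case/andP: ha.
Qed.

Lemma step_front u b p : spath D u (b :: p) ->
  leafD u b.1 \/ exists a, spath D (dstart a) (a :: b :: p).
Proof.
move=> hsp; have /and4P [hw hv he ha] := hsp.
move: (hw) => /= /andP [/eqP hb hw'].
case: (boolP [forall f, (D f && incid f u) ==> (f == b.1)]) => hf.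
  left; apply/and3P; split => //.
    by move: ha => /= /andP [].
  by rewrite -hb incid_start.
right; move: hf => /forallPn [f]; rewrite negb_imply => /andP [/andP [hDf hif] hfb].
pose a := if gsrc f == u then (f, false) else (f, true).
have ha1 : a.1 = f by rewrite /a; case: ifP.
have had : dend a = u.
  rewrite /a; case: ifP => hs; rewrite /dend /=; first by apply/eqP.
  by move: hif; rewrite /incid hs /= => /eqP.
have hfn : f \notin map fst (b :: p).
  rewrite /= in_cons negb_or hfb /=.
  apply: (EP hw' _ hif).
  by move: hv; rewrite /verts /= => /andP [].
case: (boolP (dstart a \in verts u (b :: p))) => hz.
  exfalso.
  pose i := index (dstart a) (verts u (b :: p)).
  have hi : i <= size (b :: p).
    by move: hz; rewrite -index_mem /verts /= size_map ltnS.
  apply: (cycle_in_D_absurd noC (spath_take i hsp) _ had) => //.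
  - by rewrite lastv_take // nth_index.
  - rewrite ha1; apply: contra hfn; rewrite map_take; exact: mem_take.
  - by rewrite ha1.
exists a; apply/and4P; split.
- by rewrite /= eqxx had.
- by rewrite /verts /= -/(verts _ _) had hz.
- by rewrite map_cons ha1 cons_uniq hfn he.
- by rewrite /= ha1 hDf.
Qed.

Lemma extend_front k u b p : #|gV G| - size (verts u (b :: p)) <= k -> spath D u (b :: p) ->
  exists u' q, spath D u' (q ++ b :: p) /\ leafD u' (head b q).1.
Proof.
elim: k u b p => [|k IH] u b p hk hp; case: (step_front hp) => [hl|[a ha]].
- by exists u, [::].
- exfalso; have /and4P [_ hv _ _] := ha.
  have := size_verts_le hv; move: hk.
  rewrite /verts /= !size_map; lia.
- by exists u, [::].
- have [|u' [q [h1 h2]]] := IH (dstart a) a (b :: p) _ ha.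
    by move: hk; rewrite /verts /= !size_map; lia.
  exists u', (rcons q a); rewrite cat_rcons; split => //.
  by case: q h1 h2.
Qed.

End Leaf.

Section Bd.
Local Open Scope ring_scope.
Variable (Rg : nzRingType).

Definition bd (c : gE G -> Rg) u : Rg :=
  \sum_(e : gE G) c e * ((gtgt e == u)%:R - (gsrc e == u)%:R).

Variable c : gE G -> Rg.
Let Dc : pred (gE G) := fun e => c e != 0.
Hypothesis noC : forall cy, is_cycle cy -> all (fun a => Dc a.1) cy -> False.

Lemma noloop e : c e != 0 -> gsrc e != gtgt e.
Proof.
move=> he; apply/negP => /eqP hl.
apply: (noC (cy := [:: (e, true)])); last by rewrite /= /Dc he.
split => //; split => //; split => //.
by rewrite /= /dend /dstart /= hl eqxx.
Qed.

Lemma leaf_bd u e : leafD Dc u e ->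
  bd c u = c e * ((gtgt e == u)%:R - (gsrc e == u)%:R).
Proof.
case/and3P => hDe hie /forallP hf.
rewrite /bd (bigD1 e) //= [X in _ + X]big1; first by rewrite addr0.
move=> f hfe.
case: (boolP (c f == 0)) => [/eqP -> |hcf]; first by rewrite mul0r.
have := hf f; rewrite /Dc hcf /= (negbTE hfe) implybF /incid negb_or.
by case/andP => /negbTE -> /negbTE ->; rewrite subrr mulr0.
Qed.

Lemma leaf_bd_neq0 u e : leafD Dc u e -> bd c u != 0.
Proof.
move=> hl; rewrite (leaf_bd hl).
case/and3P: hl => hDe hie _.
have hnl := noloop hDe.
move: hie; rewrite /incid; case: (boolP (gsrc e == u)) => [/eqP hs|hs] /= hie.
  have ht : (gtgt e == u) = false.
    by apply/negbTE; rewrite -hs eq_sym.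
  by rewrite ht sub0r mulrN1 oppr_eq0.
by rewrite hie subr0 mulr1.
Qed.

Lemma leaf_main v w : (forall u, bd c u = (u == w)%:R - (u == v)%:R) -> (exists e, c e != 0) ->
  exists e, (gsrc e = v /\ c e = 1) \/ (gtgt e = v /\ c e = -1).
Proof.
move=> hbd [e0 he0].
have hnl := noloop he0.
pose b := (e0, true).
have hp0 : spath Dc (gsrc e0) [:: b].
  apply/and4P; split => //=.
  - by rewrite /dstart /= eqxx.
  - by rewrite /verts /= inE andbT /dend /= hnl.
  - by rewrite andbT.
have [u1 [q1 [hs1 hl1]]] := extend_front (k := #|gV G|) noC (leq_subr _ _) hp0.
set P1 := q1 ++ [:: b] in hs1.
have hs1r := spath_rev hs1.
have hw1 : walk u1 P1 by case/and4P: hs1.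
set r := rev (map flipd P1) in hs1r.
have : r != [::] by rewrite /r /P1 map_cat rev_cat.
case hr : r => [//|b' r'] _.
rewrite hr in hs1r.
have [u2 [q2 [hs2 hl2]]] := extend_front (k := #|gV G|) noC (leq_subr _ _) hs1r.
have hlast : lastv u2 (q2 ++ b' :: r') = u1.
  rewrite lastv_cat.
  have hw2 : walk u2 (q2 ++ b' :: r') by case/and4P: hs2.
  move: hw2; rewrite walk_cat => /andP [_ /= /andP [/eqP h1 _]].
  have hw3 : walk (lastv u1 P1) (b' :: r') by case/and4P: hs1r.
  move: hw3 => /= /andP [/eqP h2 _].
  rewrite -h1 h2 -hr /r; exact: lastv_rev.
have hne : u1 != u2.
  have /and4P [_ hv _ _] := hs2.
  move: hv; rewrite /verts cons_uniq => /andP [hn _].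
  apply/negP => /eqP h; move: hn; rewrite -h -{1}hlast /lastv.
  have -> : q2 ++ b' :: r' = (head b' q2) :: (behead (q2 ++ b' :: r')) by case: q2 {hs2 hl2 hlast}.
  by rewrite /= mem_last.
have key : forall u e, leafD Dc u e -> (u == w) != (u == v).
  move=> u e hl; have := leaf_bd_neq0 hl; rewrite hbd.
  by case: (u == w); case: (u == v); rewrite ?subrr ?eqxx.
have [e [hl hvw]] : exists e, leafD Dc v e /\ v != w.
  have k1 := key _ _ hl1; have k2 := key _ _ hl2.
  case: (boolP (u1 == v)) => [/eqP h1|h1].
    exists (head b q1).1; rewrite -h1; split => //.
    by move: k1; rewrite h1 eqxx; case: (v == w).
  case: (boolP (u2 == v)) => [/eqP h2|h2].
    exists (head b' q2).1; rewrite -h2; split => //.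
    by move: k2; rewrite h2 eqxx; case: (v == w).
  exfalso; move: k1 k2; rewrite (negbTE h1) (negbTE h2) => k1 k2.
  have h3 : u1 = w by apply/eqP; move: k1; case: (u1 == w).
  have h4 : u2 = w by apply/eqP; move: k2; case: (u2 == w).
  by move: hne; rewrite h3 h4 eqxx.
exists e.
have := leaf_bd hl; rewrite hbd (negbTE hvw) eqxx sub0r.
case/and3P: hl => hDe hie _.
have hnl' := noloop hDe.
move: hie; rewrite /incid; case: (boolP (gsrc e == v)) => [/eqP hs|hs] /= hie.
  have ht : (gtgt e == v) = false.
    by apply/negbTE; rewrite -hs eq_sym.
  rewrite ht sub0r mulrN1 => /eqP; rewrite eqr_opp => /eqP h.
  by left.
rewrite hie subr0 mulr1 => h.
by right; split => //; apply/eqP.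
Qed.

End Bd.

Lemma adjF_sym (F : {set gE G}) : symmetric (adjF F).
Proof.
move=> x y; rewrite /adjF; apply/existsP/existsP => [] [e /andP [he h]]; exists e;
  by rewrite he /= orbC.
Qed.

Lemma vpath_dpath (F : {set gE G}) vs u : path (adjF F) u vs -> uniq (u :: vs) ->
  exists p, [/\ walk u p, map (@dend G) p = vs, uniq (map fst p) & all (fun a => a.1 \in F) p].
Proof.
elim: vs u => [|v vs IH] u /=; first by exists [::].
case/andP => /existsP [e /andP [heF he]] hp /andP [hu huniq].
have [p [hw hm he' ha]] := IH v hp huniq.
have [a [ha1 has hae]] : exists a, [/\ a.1 = e, dstart a = u & dend a = v].
  case/orP: he => /andP [/eqP h1 /eqP h2]; [exists (e, true) | exists (e, false)];
    by rewrite /dstart /dend /=.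
exists (a :: p); split.
- by rewrite /= has eqxx hae.
- by rewrite /= hm hae.
- rewrite map_cons cons_uniq he' andbT ha1; apply: (EP (u := v) hw).
    by rewrite /verts hm; exact: hu.
  by rewrite /incid -has -ha1; case: (a) => e' [] /=; rewrite /dstart /= eqxx ?orbT.
- by rewrite /= ha1 heF.
Qed.

Lemma connect_dpath (F : {set gE G}) x y : connect (adjF F) x y ->
  exists p, [/\ walk x p, lastv x p = y, uniq (verts x p), uniq (map fst p) & all (fun a => a.1 \in F) p].
Proof.
case/connectP => p hp ->.
case: (shortenP hp) => p' hp' hu _.
have [q [hw hm he ha]] := vpath_dpath hp' hu.
by exists q; split => //; rewrite /lastv ?/verts hm.
Qed.

Lemma ball_center x n : x \in ball x n.
Proof. by elim: n => [|n IH] /=; rewrite ?inE ?IH. Qed.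

Lemma ball_S x n y : y \in ball x n.+1 = (y \in ball x n) || [exists z in ball x n, adj z y].
Proof. by rewrite /= in_setU in_set. Qed.

Lemma ball_step x n z y : z \in ball x n -> adj z y -> y \in ball x n.+1.
Proof. by move=> hz hy; rewrite ball_S; apply/orP; right; apply/existsP; exists z; rewrite hz. Qed.

Lemma ball_mono x n y : y \in ball x n -> y \in ball x n.+1.
Proof. by rewrite ball_S => ->. Qed.

Lemma ball_trans x z y i j : z \in ball x i -> y \in ball z j -> y \in ball x (i + j).
Proof.
move=> hz; elim: j y => [|j IH] y; first by rewrite /= inE addn0 => /eqP ->.
rewrite ball_S => /orP [h|/existsP [w /andP [hw hwy]]].
  by rewrite addnS; apply: ball_mono; apply: IH.
by rewrite addnS; apply: (ball_step (IH _ hw)).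
Qed.

Lemma path_ball x (s : seq (gV G)) : path (@adj G) x s -> last x s \in ball x (size s).
Proof.
elim/last_ind: s => [|p z IH]; first by rewrite ball_center.
rewrite rcons_path last_rcons size_rcons => /andP [hp hz].
exact: ball_step (IH hp) hz.
Qed.

Lemma gdist_le x y n : y \in ball x n -> gdist x y <= n.
Proof.
move=> hy; rewrite /gdist.
case: (ltnP n #|gV G|) => hn; last first.
  by apply: leq_trans (find_size _ _) _; rewrite size_iota.
rewrite leqNgt; apply/negP => hlt.
have := before_find 0 hlt; rewrite nth_iota // add0n hy //.
Qed.

Lemma gdist_ball x y : connect (@adj G) x y -> y \in ball x (gdist x y).
Proof.
case/connectP => p hp ->.
case: (shortenP hp) => p' hp' hu _.
have hs : size p' < #|gV G|.
  by have := card_uniqP hu; rewrite /= => <-; apply: max_card.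
have hb := path_ball hp'.
have hhas : has (fun n => last x p' \in ball x n) (iota 0 #|gV G|).
  by apply/hasP; exists (size p'); rewrite ?mem_iota ?add0n.
have := nth_find 0 hhas; rewrite nth_iota ?add0n //.
by move: hhas; rewrite has_find size_iota.
Qed.

Lemma gdist_diam x y : gdist x y <= gdiam G.
Proof.
rewrite /gdiam.
exact: (leq_trans (leq_bigmax (F := fun y => gdist x y) y) (leq_bigmax (F := fun x => \max_y gdist x y) x)).
Qed.

End GraphLemmas.

End Part1.
Import Part1.

Module Part2.
From HB Require Import structures.
From mathcomp Require Import all_boot all_order all_algebra.
From Stdlib Require Import Reals Lia.
From mathcomp Require Import zify ring.

Set Implicit Arguments.
Unset Strict Implicit.
Unset Printing Implicit Defensive.
Import GRing.Theory.

Section Cover2.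
Variables (m : nat) (G : graph) (T : {set gE G}).
Hypothesis hm : (2 < m)%nat.
Hypothesis hT : spanning_tree T.
Local Notation C := (homology_cover m T).
Local Open Scope ring_scope.

Definition side (e : gE G) (v : gV G) : bool := connect (adjF (T :\ e)) (gtgt e) v.

Lemma side_tgt e : side e (gtgt e).
Proof. exact: connect0. Qed.

Lemma side_src e : e \in T -> ~~ side e (gsrc e).
Proof.
move=> heT; apply/negP => /connect_dpath [p [hw hl hv hu ha]].
have hn : (e, true).1 \notin map fst p.
  apply/negP => /mapP [a ha' hea].
  by move: (allP ha a ha'); rewrite -hea /= in_setD1 eqxx.
have hc := cycle_close (a := (e, true)) hw hv hu (esym hl) erefl hn.
apply: (hT.2 _ hc); rewrite all_rcons /= heT.
apply: sub_all ha => a; rewrite in_setD1 => /andP [].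
by [].
Qed.

Lemma side_adj e e' : e' \in T -> e' != e -> side e (gsrc e') = side e (gtgt e').
Proof.
move=> he'T hne.
have hadj : adjF (T :\ e) (gsrc e') (gtgt e').
  by apply/existsP; exists e'; rewrite in_setD1 hne he'T !eqxx.
have hsym := sym_connect_sym (adjF_sym (T :\ e)).
rewrite /side; apply/idP/idP => h.
  exact: connect_trans h (connect1 hadj).
apply: connect_trans h _; rewrite hsym; exact: connect1.
Qed.

Definition sg (e g : gE G) : 'Z_m :=
  if e \in T then (side e (gsrc g))%:R - (side e (gtgt g))%:R else (g == e)%:R.

Definition phi (x : gV C) (e : gE G) : 'Z_m :=
  (if e \in T then (side e x.1)%:R else 0) + \sum_(f : nontree T) x.2 f * sg e (val f).

Lemma sum_rho e' (he : e' \notin T) (F : gE G -> 'Z_m) :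
  \sum_(f : nontree T) rho m T e' f * F (val f) = F e'.
Proof.
rewrite (bigD1 (exist _ e' he)) //= big1 ?addr0.
  by rewrite /rho ffunE /= eqxx mul1r.
move=> f hf; rewrite /rho ffunE.
case: eqP => [h|_]; last by rewrite mul0r.
by exfalso; move/negP: hf; apply; apply/eqP; apply: val_inj.
Qed.

Lemma phi_edge (p : gE C) e : phi (gtgt p) e = phi (gsrc p) e + (p.1 == e)%:R.
Proof.
case: p => e' k; rewrite /phi /=.
case: (boolP (e' \in T)) => he'.
  case: (boolP (e \in T)) => he; last first.
    have -> : (e' == e) = false by apply/negbTE; apply: contraNneq he => <-.
    by rewrite addr0.
  case: (eqVneq e' e) => [<-|hne].
    by rewrite side_tgt (negbTE (side_src he')) /= add0r addrC.
  by rewrite (side_adj he' hne) addr0.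
have -> : \sum_(f : nontree T) (rho m T e' + k) f * sg e (val f)
  = \sum_(f : nontree T) rho m T e' f * sg e (val f) + \sum_(f : nontree T) k f * sg e (val f).
  by rewrite -big_split /=; apply: eq_bigr => f _; rewrite ffunE mulrDl.
rewrite sum_rho // /sg.
case: (boolP (e \in T)) => he.
  have -> : (e' == e) = false by apply/negbTE; apply: contraNneq he' => ->.
  by rewrite addr0 !addrA; congr (_ + _); rewrite addrAC subrr add0r.
by rewrite !add0r addrC.
Qed.


Definition Dset (x y : gV C) : {set gE G} := [set e | phi x e != phi y e].

Lemma adj_phi (x z : gV C) : adj x z -> exists e,
  (forall e0, phi z e0 = phi x e0 + (e == e0)%:R) \/ (forall e0, phi x e0 = phi z e0 + (e == e0)%:R).
Proof.
case/existsP => p /andP [_ /orP [] /andP [/eqP hs /eqP ht]]; exists p.1.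
  by left => e0; rewrite -hs -ht phi_edge.
by right => e0; rewrite -hs -ht phi_edge.
Qed.

Lemma Dset_adj x z : adj x z -> (#|Dset x z| <= 1)%nat.
Proof.
case/adj_phi => e h.
have : Dset x z \subset [set e].
  apply/subsetP => e0; rewrite !inE; apply: contraR => hne.
  have h0 : (e == e0) = false by apply/negbTE; rewrite eq_sym.
  case: h => ->; rewrite h0 addr0 //.
move/subset_leq_card; by rewrite cards1.
Qed.

Lemma Dset_tri x z y : (#|Dset x y| <= #|Dset x z| + #|Dset z y|)%nat.
Proof.
apply: leq_trans (leq_card_setU _ _).
apply: subset_leq_card; apply/subsetP => e; rewrite !inE => h.
apply/orP; case: (eqVneq (phi x e) (phi z e)) => h1; last by left.
by right; rewrite -h1.
Qed.

Lemma Dset_ball x y n : y \in ball x n -> (#|Dset x y| <= n)%nat.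
Proof.
elim: n y => [|n IH] y.
  rewrite /= inE => /eqP ->; rewrite leqn0 cards_eq0; apply/eqP/setP => e.
  by rewrite !inE eqxx.
rewrite ball_S => /orP [h|/existsP [z /andP [hz hzy]]].
  by apply: leq_trans (IH _ h) _.
apply: leq_trans (Dset_tri x z y) _.
rewrite -addn1; apply: leq_add; [exact: IH | exact: Dset_adj].
Qed.

Lemma tree_lift v w k : connect (adjF T) v w -> connect (@adj C) (v, k) (w, k).
Proof.
case/connectP => s hp ->.
elim: s v hp => [|u s IH] v /=; first by move=> _; exact: connect0.
case/andP => h1 h2; apply: connect_trans (IH _ h2).
apply: connect1; case/existsP: h1 => e /andP [heT he].
apply/existsP; exists (e, k); rewrite inE /=.
by rewrite heT !xpair_eqE eqxx !andbT.
Qed.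

Lemma cross f k (hf : f \notin T) : connect (@adj C) (gsrc f, k) (gtgt f, rho m T f + k).
Proof.
apply: connect1; apply/existsP; exists (f, k); rewrite inE /=.
by rewrite (negbTE hf) !eqxx.
Qed.

Lemma tconn v w : connect (adjF T) v w.
Proof. by case: hT => [[_ h] _]; apply: h. Qed.

Lemma shift1 v k f (hf : f \notin T) : connect (@adj C) (v, k) (v, rho m T f + k).
Proof.
apply: connect_trans (tree_lift k (tconn v (gsrc f))) _.
apply: connect_trans (cross k hf) _.
exact: tree_lift (tconn _ _).
Qed.

Lemma shift_all v (d : coverK m T) k : connect (@adj C) (v, k) (v, d + k).
Proof.
have hd : d = \sum_(f : nontree T) rho m T (val f) *+ (d f : nat).
  apply/ffunP => g; rewrite sum_ffunE (bigD1 g) //= big1 ?addr0.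
    by rewrite ffunMnE /rho ffunE eqxx natr_Zp.
  move=> f hf; rewrite ffunMnE /rho ffunE.
  case: eqP => [h|_]; last by rewrite mul0rn.
  by exfalso; move/negP: hf; apply; apply/eqP; apply: val_inj.
rewrite hd; elim/big_rec: _ k => [|f d' _ IH] k; first by rewrite add0r; exact: connect0.
rewrite -addrA; apply: connect_trans (IH k) _.
elim: (d f : nat) => [|n IHn]; first by rewrite mulr0n add0r; exact: connect0.
rewrite mulrS -addrA; apply: connect_trans IHn _.
have hf : val f \notin T := valP f.
exact: shift1.
Qed.

Lemma cover_connect (x y : gV C) : connect (@adj C) x y.
Proof.
case: x y => [v k] [w k'].
apply: connect_trans (tree_lift k (tconn v w)) _.
have -> : k' = (k' - k) + k by rewrite subrK.
exact: shift_all.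
Qed.


Lemma bd_ext (c1 c2 : gE G -> 'Z_m) u : (forall e, c1 e = c2 e) -> bd c1 u = bd c2 u.
Proof. by move=> h; apply: eq_bigr => e _; rewrite h. Qed.

Lemma bd_add (c1 c2 : gE G -> 'Z_m) u : bd (fun e => c1 e + c2 e) u = bd c1 u + bd c2 u.
Proof. by rewrite /bd -big_split /=; apply: eq_bigr => e _; rewrite mulrDl. Qed.

Lemma bd_opp (c1 : gE G -> 'Z_m) u : bd (fun e => - c1 e) u = - bd c1 u.
Proof. by rewrite /bd -sumrN; apply: eq_bigr => e _; rewrite mulNr. Qed.

Lemma bd0 u : bd (fun _ : gE G => 0 : 'Z_m) u = 0.
Proof. by rewrite /bd big1 // => e _; rewrite mul0r. Qed.

Lemma bd_delta (e0 : gE G) u : bd (fun e => (e0 == e)%:R : 'Z_m) u = (gtgt e0 == u)%:R - (gsrc e0 == u)%:R.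
Proof.
rewrite /bd (bigD1 e0) //= eqxx mul1r [X in _ + X]big1 ?addr0 // => e he.
by rewrite eq_sym (negbTE he) mul0r.
Qed.

Lemma bd_phi (x y : gV C) u :
  bd (fun e => phi y e - phi x e) u = (y.1 == u)%:R - (x.1 == u)%:R.
Proof.
case/connectP: (cover_connect x y) => s hp ->.
elim/last_ind: s hp u => [|s z IH] hp u.
  by rewrite /= (bd_ext (c2 := fun _ => 0)) ?bd0 ?subrr // => e; rewrite subrr.
move: hp; rewrite rcons_path => /andP [hp' hz]; rewrite last_rcons.
case/existsP: hz => p /andP [_ /orP [] /andP [/eqP hs /eqP ht]].
  rewrite (bd_ext (c2 := fun e => (phi (last x s) e - phi x e) + (p.1 == e)%:R)); last first.
    by move=> e; rewrite -ht phi_edge hs; ring.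
  rewrite bd_add IH // bd_delta -ht -hs /=.
  ring.
rewrite (bd_ext (c2 := fun e => (phi (last x s) e - phi x e) + - (p.1 == e)%:R)); last first.
  by move=> e; rewrite -hs -ht phi_edge; ring.
rewrite bd_add IH // bd_opp bd_delta -ht -hs /=.
ring.
Qed.

Lemma phi_inj (x y : gV C) : (forall e, phi x e = phi y e) -> x = y.
Proof.
move=> h.
have h1 : x.1 = y.1.
  have := bd_phi x y y.1.
  rewrite (bd_ext (c2 := fun _ => 0)) ?bd0; last by move=> e; rewrite h subrr.
  rewrite eqxx; case: eqP => // _ /=; rewrite subr0 => /esym /eqP; by rewrite oner_eq0.
case: x y h h1 => v k [w k'] /= h ->; congr pair.
apply/ffunP => f; have := h (val f).
rewrite /phi /= (negbTE (valP f)) !add0r.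
have hs : forall kk : coverK m T, \sum_(g : nontree T) kk g * sg (val f) (val g) = kk f.
  move=> kk; rewrite /sg (negbTE (valP f)) (bigD1 f) //= eqxx mulr1 big1 ?addr0 // => g hg.
  case: eqP => [hv|_]; last by rewrite mulr0.
  by exfalso; move/negP: hg; apply; apply/eqP; apply: val_inj.
by rewrite !hs.
Qed.

Lemma key_ball g (hg : girth_ge G g) k : forall x y, #|Dset x y| = k -> (k < g)%nat -> y \in ball x k.
Proof.
elim: k => [|k IH] x y hk hkg.
  have -> : y = x.
    apply: phi_inj => e; apply/eqP; move/eqP: hk; rewrite cards_eq0 => /eqP /setP /(_ e).
    by rewrite !inE eq_sym => /negbFE.
  exact: ball_center.
pose c := fun e => phi y e - phi x e.
have hD : forall e, (e \in Dset x y) = (c e != 0).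
  by move=> e; rewrite inE /c subr_eq0 eq_sym.
have noC : forall cy, is_cycle cy -> all (fun a => c a.1 != 0) cy -> False.
  move=> cy hcy hall; have := hg _ hcy.
  have : (size cy <= #|Dset x y|)%nat.
    case: hcy => _ [hu _]; rewrite -(size_map fst) -(card_uniqP hu).
    apply: subset_leq_card; apply/subsetP => e /mapP [a ha ->].
    by rewrite hD; apply: (allP hall).
  by rewrite hk; lia.
have hbd : forall u, bd c u = (u == y.1)%:R - (u == x.1)%:R.
  by move=> u; rewrite bd_phi !(eq_sym u).
have hne : exists e, c e != 0.
  have : (0 < #|Dset x y|)%nat by rewrite hk.
  by case/card_gt0P => e; rewrite hD => he; exists e.
have [e [[he hce]|[he hce]]] := leaf_main noC hbd hne.
  pose p : gE C := (e, x.2).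
  have hsp : gsrc p = x by rewrite /p /= he; case: (x).
  have hadj : adj x (gtgt p) by apply/existsP; exists p; rewrite inE -hsp !eqxx.
  have hDs : #|Dset (gtgt p) y| = k.
    have -> : Dset (gtgt p) y = Dset x y :\ e.
      apply/setP => e0; rewrite !inE phi_edge hsp.
      case: (eqVneq e e0) => [<-|hne0] /=.
        move: hce; rewrite /c => /eqP; rewrite subr_eq addrC => /eqP ->.
        by rewrite eqxx.
      by rewrite addr0.
    have hin : e \in Dset x y by rewrite hD hce oner_neq0.
    by move: hk; rewrite (cardsD1 e) hin add1n => [[]].
  have := ball_trans (i := 1) (ball_step (ball_center x 0) hadj) (IH _ _ hDs (ltnW hkg)).
  by [].
pose k0 : coverK m T := if e \in T then x.2 else x.2 - rho m T e.
pose p : gE C := (e, k0).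
have htp : gtgt p = x.
  rewrite /p /k0 /= he; case: (e \in T); first by case: (x).
  by rewrite addrC subrK; case: (x).
have hadj : adj x (gsrc p) by apply/existsP; exists p; rewrite inE -htp !eqxx orbT.
have hDs : #|Dset (gsrc p) y| = k.
  have -> : Dset (gsrc p) y = Dset x y :\ e.
    apply/setP => e0; rewrite !inE.
    have hx : phi x e0 = phi (gsrc p) e0 + (e == e0)%:R by rewrite -htp phi_edge.
    rewrite hx; move: hx.
    case: (eqVneq e e0) => [<-|hne0] hx /=.
      move: hce; rewrite /c => /eqP; rewrite subr_eq hx => /eqP ->.
      by rewrite /= mulr1n addrC addrK eqxx.
    by rewrite addr0.
  have hin : e \in Dset x y by rewrite hD hce oppr_eq0 oner_neq0.
  by move: hk; rewrite (cardsD1 e) hin add1n => [[]].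
have := ball_trans (i := 1) (ball_step (ball_center x 0) hadj) (IH _ _ hDs (ltnW hkg)).
by [].
Qed.

End Cover2.

End Part2.
Import Part2.

Module Part3.
From HB Require Import structures.
From mathcomp Require Import all_boot all_order all_algebra.
From Stdlib Require Import Reals Lra Lia.
From mathcomp Require Import zify.

Set Implicit Arguments.
Unset Strict Implicit.
Unset Printing Implicit Defensive.

Lemma Rplus_assoc' : associative Rplus. Proof. by move=> *; rewrite Rplus_assoc. Qed.
HB.instance Definition _ := Monoid.isComLaw.Build R 0%R Rplus Rplus_assoc' Rplus_comm Rplus_0_l.

Local Open Scope R_scope.

Lemma big_cat_natR n m p (P : pred nat) (F : nat -> R) : (m <= n)%nat -> (n <= p)%nat ->
  \big[Rplus/0]_(m <= i < p | P i) F i =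
  \big[Rplus/0]_(m <= i < n | P i) F i + \big[Rplus/0]_(n <= i < p | P i) F i.
Proof. exact: big_cat_nat. Qed.

Lemma big_nat_recrR n m (F : nat -> R) : (m <= n)%nat ->
  \big[Rplus/0]_(m <= i < n.+1) F i = \big[Rplus/0]_(m <= i < n) F i + F n.
Proof. exact: big_nat_recr. Qed.

Lemma INR_sum (I : Type) (r : seq I) (P : pred I) (f : I -> nat) :
  INR (\sum_(i <- r | P i) f i)%nat = \big[Rplus/0]_(i <- r | P i) INR (f i).
Proof. by apply: (big_morph INR) => //; move=> x y; rewrite plus_INR. Qed.

Lemma sum_ge0 (I : Type) (r : seq I) (P : pred I) (f : I -> R) :
  (forall i, P i -> 0 <= f i) -> 0 <= \big[Rplus/0]_(i <- r | P i) f i.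
Proof. move=> h; apply: (big_ind (fun x => 0 <= x)) => //; [lra | move=> *; lra]. Qed.

Lemma sum_le (I : Type) (r : seq I) (P : pred I) (f g : I -> R) :
  (forall i, P i -> f i <= g i) ->
  \big[Rplus/0]_(i <- r | P i) f i <= \big[Rplus/0]_(i <- r | P i) g i.
Proof. move=> h; apply: (big_ind2 (fun x y => x <= y)) => //; [lra | move=> *; lra]. Qed.

Lemma sum_f_R0_big s n : sum_f_R0 s n = \big[Rplus/0]_(0 <= i < n.+1) s i.
Proof.
elim: n => [|n IH]; first by rewrite big_nat1.
rewrite [RHS](@big_nat_recrR n.+1 0) //=. by rewrite IH.
Qed.

Lemma inf_sum_fin s B : (forall i, (B <= i)%nat -> s i = 0) ->
  infinite_sum s (\big[Rplus/0]_(0 <= i < B) s i).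
Proof.
move=> h eps heps; exists B => n /leP hn.
have h2 : \big[Rplus/0]_(B <= i < n.+1) s i = 0.
  by rewrite big_nat_cond big1 // => i /andP [/andP [hi _] _]; apply: h.
rewrite sum_f_R0_big (big_cat_natR (n := B)) //; last by apply: leqW.
by rewrite h2 Rplus_0_r R_dist_eq.
Qed.

Lemma sum_block (h : nat -> R) off Rn B : (off + Rn <= B)%nat ->
  \big[Rplus/0]_(0 <= i < B) (if (off <= i < off + Rn)%nat then h (i - off)%nat else 0)
  = \big[Rplus/0]_(0 <= r < Rn) h r.
Proof.
move=> hB.
pose f := fun i => if (off <= i < off + Rn)%nat then h (i - off)%nat else 0.
have h1 : \big[Rplus/0]_(0 <= i < off) f i = 0.
  rewrite big_nat_cond big1 // => i /andP [/andP [_ hi] _].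
  by rewrite /f leqNgt hi.
have h2 : \big[Rplus/0]_(off + Rn <= i < B) f i = 0.
  rewrite big_nat_cond big1 // => i /andP [/andP [hi _] _].
  by rewrite /f ltnNge hi andbF.
have h3 : \big[Rplus/0]_(off <= i < off + Rn) f i = \big[Rplus/0]_(0 <= r < Rn) h r.
  rewrite -{1}(add0n off) big_addn addKn.
  rewrite big_nat_cond [RHS]big_nat_cond; apply: eq_bigr => i /andP [/andP [_ hi] _].
  by rewrite /f addnK leq_addl /= addnC ltn_add2l hi.
change (\big[Rplus/0]_(0 <= i < B) f i = \big[Rplus/0]_(0 <= r < Rn) h r).
rewrite (big_cat_natR (n := off)) //; last by lia.
rewrite (big_cat_natR (n := off + Rn) (m := off)) //; last by lia.
by rewrite h1 h2 h3; lra.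
Qed.

Lemma up_mono s t : s <= t -> (up s <= up t)%Z.
Proof.
move=> hst; have [h1 h2] := archimed s; have [h3 h4] := archimed t.
case: (Z.le_gt_cases (up s) (up t)) => // H.
have H' : (up t <= up s - 1)%Z by lia.
have := IZR_le _ _ H'; rewrite minus_IZR /=; lra.
Qed.

Definition jc (t : R) : nat := Z.to_nat (up t).
Definition fl (t : R) : nat := (jc t).-1.

Lemma jc_mono s t : s <= t -> (jc s <= jc t)%nat.
Proof. move=> h; have := up_mono h; rewrite /jc; lia. Qed.

Lemma fl_mono s t : s <= t -> (fl s <= fl t)%nat.
Proof. move=> h; have := jc_mono h; rewrite /fl; lia. Qed.

Lemma up_INR n : up (INR n) = (Z.of_nat n + 1)%Z.
Proof.
symmetry; apply: tech_up; rewrite plus_IZR -INR_IZR_INZ /=; lra.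
Qed.

Lemma fl_INR n : fl (INR n) = n.
Proof. rewrite /fl /jc up_INR; lia. Qed.

Lemma up_pos t : 0 <= t -> (1 <= up t)%Z.
Proof.
move=> ht; have [h1 _] := archimed t.
case: (Z.le_gt_cases 1 (up t)) => // H; have H' : (up t <= 0)%Z by lia.
have := IZR_le _ _ H'; lra.
Qed.

Lemma INR_jc t : 0 <= t -> INR (jc t) = IZR (up t).
Proof.
move=> ht; rewrite /jc INR_IZR_INZ Znat.Z2Nat.id //; have := up_pos ht; lia.
Qed.

Lemma jc_gt t : 0 <= t -> t < INR (jc t).
Proof. move=> ht; rewrite INR_jc //; have [h1 _] := archimed t; lra. Qed.

Lemma fl_le t : 0 <= t -> INR (fl t) <= t.
Proof.
move=> ht; have hj : (1 <= jc t)%nat by rewrite /jc; have := up_pos ht; lia.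
rewrite /fl -subn1 minus_INR; last by apply/leP.
rewrite INR_jc //; have [_ h2] := archimed t; rewrite /=; lra.
Qed.

Lemma sum_drop (Q : Type) (s : seq Q) (f : Q -> R) (c : nat -> R) :
  \big[Rplus/0]_(0 <= r < size s) (match drop r s with p :: _ => f p | [::] => c r end)
  = \big[Rplus/0]_(p <- s) f p.
Proof.
elim: s c => [|a s IH] c; first by rewrite !big_nil.
rewrite /= big_nat_recl // big_cons /=; congr Rplus.
by rewrite -(IH (fun r => c r.+1)).
Qed.

Lemma sum_scal (I : Type) (r : seq I) (P : pred I) (f : I -> R) k :
  \big[Rplus/0]_(i <- r | P i) (k * f i) = k * \big[Rplus/0]_(i <- r | P i) f i.
Proof.
apply: (big_ind2 (fun x y => x = k * y)) => //; first lra.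
by move=> a b c' d' -> ->; lra.
Qed.

End Part3.
Import Part3.

Module Part4.
From HB Require Import structures.
From mathcomp Require Import all_boot all_order all_algebra.
From Stdlib Require Import Reals Lra Lia.
From mathcomp Require Import zify.

Set Implicit Arguments.
Unset Strict Implicit.
Unset Printing Implicit Defensive.

Local Open Scope R_scope.

Lemma INR_b (b : bool) : INR b = if b then 1 else 0.
Proof. by case: b. Qed.

Lemma sum_onehot (Q : finType) (u v : Q) :
  \big[Rplus/0]_(a : Q) (INR (u == a) - INR (v == a)) ^ 2 = 2 * INR (u != v).
Proof.
case: (eqVneq u v) => [<-|huv].
  by rewrite big1 /= ?Rmult_0_r // => a _; rewrite Rminus_diag /=; ring.
rewrite (bigD1 u) //= (bigD1 v) /=; last by rewrite eq_sym huv.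
rewrite big1 /=.
  rewrite eqxx eq_sym (negbTE huv) eqxx; rewrite !INR_b; lra.
move=> a /andP [hau hav].
by rewrite !INR_b eq_sym (negbTE hau) eq_sym (negbTE hav); ring.
Qed.

Section Main.
Variables (m : nat) (X : nat -> graph) (T : forall n, {set gE (X n)}).
Local Notation Cv n := (homology_cover m (T n)).
Variable x0 : forall n, gV (Cv n).
Variable d : {n : nat & gV (Cv n)} -> {n : nat & gV (Cv n)} -> R.

Definition A n : finType := (gE (X n) * 'Z_m)%type.
Definition elist n : seq (A n) := enum (A n).
Definition Rn n := size (elist n).
Definition bpt n : {n & gV (Cv n)} := existT _ n (x0 n).
Definition diam n := gdiam (Cv n).
Definition beta n := d (bpt n) (bpt 0) + INR (diam n).
Definition vl n (x : gV (Cv n)) (p : A n) : R :=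
  INR (phi x p.1 == p.2) - INR (phi (x0 n) p.1 == p.2).
Definition hblk n (x : gV (Cv n)) r : R :=
  match drop r (elist n) with p :: _ => vl x p | [::] => if r == Rn n then sqrt (beta n) else 0 end.
Definition Ln n := (Rn n).+1.
Definition off n := (\sum_(0 <= j < n) Ln j)%nat.
Definition Fe (z : {n & gV (Cv n)}) (i : nat) : R :=
  let: existT n x := z in if (off n <= i < off n + Ln n)%nat then hblk x (i - off n) else 0.

Lemma S_vl n (x y : gV (Cv n)) :
  \big[Rplus/0]_(p : A n) (vl x p - vl y p) ^ 2 = 2 * INR #|Dset x y|.
Proof.
rewrite -(pair_bigA _ (fun e a => (vl x (e, a) - vl y (e, a)) ^ 2)) /=.
rewrite (eq_bigr (fun e => 2 * INR (phi x e != phi y e))); last first.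
  move=> e _; rewrite -sum_onehot; apply: eq_bigr => a _; rewrite /vl.
  have H : forall a b c : R, (a - c - (b - c)) ^ 2 = (a - b) ^ 2 by move=> *; ring.
  exact: H.
rewrite sum_scal -INR_sum; congr (_ * INR _).
rewrite -sum1_card [RHS]big_mkcond /=; apply: eq_bigr => e _.
by rewrite inE; case: (_ != _).
Qed.

Lemma elist_sum n (f : A n -> R) : \big[Rplus/0]_(p <- elist n) f p = \big[Rplus/0]_(p : A n) f p.
Proof. by rewrite /elist big_enum. Qed.


Lemma sqdiag (a : R) : (a - a) ^ 2 = 0.
Proof. ring. Qed.

Lemma sq0 : (0 - 0) ^ 2 = 0.
Proof. ring. Qed.

Lemma vl_base n (p : A n) : vl (x0 n) p = 0.
Proof. by rewrite /vl Rminus_diag. Qed.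

Lemma block_diff n (x y : gV (Cv n)) :
  \big[Rplus/0]_(0 <= r < Ln n) (hblk x r - hblk y r) ^ 2 = 2 * INR #|Dset x y|.
Proof.
rewrite /Ln big_nat_recrR //.
have -> : (hblk x (Rn n) - hblk y (Rn n)) ^ 2 = 0.
  by rewrite /hblk drop_oversize // eqxx sqdiag.
rewrite Rplus_0_r.
rewrite (eq_bigr (fun r => match drop r (elist n) with p :: _ => (vl x p - vl y p) ^ 2 | [::] => 0 end)); last first.
  move=> r _; rewrite /hblk; case: (drop r (elist n)) => [|p s] //.
  by case: (r == Rn n); rewrite sqdiag.
by rewrite /Rn (sum_drop _ _ (fun _ => 0)) elist_sum S_vl.
Qed.

Lemma block_sq n (x : gV (Cv n)) : 0 <= beta n ->
  \big[Rplus/0]_(0 <= r < Ln n) (hblk x r) ^ 2 = 2 * INR #|Dset x (x0 n)| + beta n.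
Proof.
move=> hb.
rewrite /Ln big_nat_recrR //.
have -> : (hblk x (Rn n)) ^ 2 = beta n.
  by rewrite /hblk drop_oversize // eqxx pow2_sqrt.
congr Rplus.
rewrite (@eq_big_nat _ _ _ 0 (Rn n) _ (fun r => match drop r (elist n) with p :: _ => (vl x p - vl (x0 n) p) ^ 2 | [::] => 0 end)); last first.
  move=> r /andP [_ hr]; rewrite /hblk; case: (drop r (elist n)) => [|p s].
    by rewrite (ltn_eqF hr) /=; ring.
  by rewrite (vl_base p) Rminus_0_r.
by rewrite /Rn (sum_drop _ _ (fun _ => 0)) elist_sum S_vl.
Qed.


Lemma Fe_out n (x : gV (Cv n)) i : ~~ (off n <= i < off n + Ln n)%nat -> Fe (existT _ n x) i = 0.
Proof. by move=> h; rewrite /= (negbTE h). Qed.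

Lemma off_lt n k : (n < k)%nat -> (off n + Ln n <= off k)%nat.
Proof.
move=> hnk; rewrite /off -big_nat_recr //=.
rewrite (big_cat_nat _ (n := n.+1) (m := 0) (p := k)) //=.
exact: leq_addr.
Qed.

Lemma big_splitR (I : Type) (r : seq I) (f g : I -> R) :
  \big[Rplus/0]_(i <- r) (f i + g i) = \big[Rplus/0]_(i <- r) f i + \big[Rplus/0]_(i <- r) g i.
Proof. exact: big_split. Qed.

Lemma Fe_l2 z : in_l2 (Fe z).
Proof.
case: z => n x.
exists (\big[Rplus/0]_(0 <= i < off n + Ln n) (Fe (existT _ n x) i) ^ 2).
apply: inf_sum_fin => i hi; rewrite Fe_out /=; first ring.
by rewrite negb_and ltnNge hi orbT.
Qed.

Lemma dist_same n (x y : gV (Cv n)) :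
  l2_dist_is (Fe (existT _ n x)) (Fe (existT _ n y)) (sqrt (2 * INR #|Dset x y|)).
Proof.
set B := (off n + Ln n)%nat.
exists (\big[Rplus/0]_(0 <= i < B) (Fe (existT _ n x) i - Fe (existT _ n y) i) ^ 2); split.
  apply: inf_sum_fin => i hi; rewrite !Fe_out ?sq0 //.
    by rewrite negb_and ltnNge hi orbT.
  by rewrite negb_and ltnNge hi orbT.
congr sqrt; rewrite -block_diff.
rewrite -(sum_block (fun r => (hblk x r - hblk y r) ^ 2) (off := off n) (B := B)) //.
apply: eq_bigr => i _; rewrite /Fe.
by case: ifP => _ //; rewrite sq0.
Qed.

Lemma dist_diff n k (x : gV (Cv n)) (y : gV (Cv k)) : n != k -> 0 <= beta n -> 0 <= beta k ->
  l2_dist_is (Fe (existT _ n x)) (Fe (existT _ k y))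
    (sqrt ((2 * INR #|Dset x (x0 n)| + beta n) + (2 * INR #|Dset y (x0 k)| + beta k))).
Proof.
move=> hnk hbn hbk.
set B := maxn (off n + Ln n) (off k + Ln k).
have disj : forall i, ~~ ((off n <= i < off n + Ln n) && (off k <= i < off k + Ln k))%nat.
  move=> i; case: (ltngtP n k) hnk => // h _.
    have := off_lt h; apply: contraL => /andP [/andP [_ h1] /andP [h2 _]]; lia.
  have := off_lt h; apply: contraL => /andP [/andP [h1 _] /andP [_ h2]]; lia.
exists (\big[Rplus/0]_(0 <= i < B) (Fe (existT _ n x) i - Fe (existT _ k y) i) ^ 2); split.
  apply: inf_sum_fin => i hi; rewrite !Fe_out ?sq0 //.
    by rewrite negb_and ltnNge (leq_trans (leq_maxr _ _) hi) orbT.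
  by rewrite negb_and ltnNge (leq_trans (leq_maxl _ _) hi) orbT.
congr sqrt; rewrite -(block_sq x hbn) -(block_sq y hbk).
rewrite -(sum_block (fun r => (hblk x r) ^ 2) (off := off n) (B := B)) ?leq_maxl //.
rewrite -(sum_block (fun r => (hblk y r) ^ 2) (off := off k) (B := B)) ?leq_maxr //.
rewrite -big_splitR; apply: eq_bigr => i _; rewrite /Fe.
have := disj i.
case: ifP => h1; case: ifP => h2 //= _.
- by rewrite Rminus_0_r Rplus_0_r.
- by rewrite Rminus_0_l Rplus_0_l; ring.
- ring.
Qed.

End Main.

From Stdlib Require Import ClassicalEpsilon.

Section Final.
Variables (m : nat) (X : nat -> graph) (T : forall n, {set gE (X n)}).
Local Notation Cv n := (homology_cover m (T n)).
Variable x0 : forall n, gV (Cv n).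
Variable d : {n : nat & gV (Cv n)} -> {n : nat & gV (Cv n)} -> R.
Hypothesis hm : (3 <= m)%nat.
Hypothesis hgirth : forall g : nat, exists N : nat, forall n, (N <= n)%nat -> girth_ge (X n) g.
Hypothesis hT : forall n, spanning_tree (T n).
Hypothesis hd : @coarse_disjoint_union_metric (fun n => homology_cover m (T n)) d.

Definition Ng g : nat := proj1_sig (constructive_indefinite_description _ (hgirth g)).
Lemma Ng_spec g n : (Ng g <= n)%nat -> girth_ge (X n) g.
Proof. exact: (proj2_sig (constructive_indefinite_description _ (hgirth g))). Qed.

Definition Nm g : nat := (\max_(i < g.+1) Ng i)%nat.
Lemma Nm_ge g : (Ng g <= Nm g)%nat.
Proof. exact: (leq_bigmax (F := fun i : 'I_g.+1 => Ng i) ord_max). Qed.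

Let dm n := @diam m X T n.

Definition hh g : nat := (\sum_(0 <= i < Nm g) dm i + g)%nat.
Definition Gn j : nat := (\max_(g <- iota 0 j.+1 | (hh g <= j)%nat) g)%nat.

Lemma Gn_le j : (Gn j <= j)%nat.
Proof. by apply/bigmax_leqP_seq => g; rewrite mem_iota add0n ltnS. Qed.

Lemma Gn_mono j j' : (j <= j')%nat -> (Gn j <= Gn j')%nat.
Proof.
move=> hj; apply/bigmax_leqP_seq => g; rewrite mem_iota add0n ltnS => hg hh'.
apply: leq_bigmax_seq; first by rewrite mem_iota add0n ltnS (leq_trans hg hj).
exact: leq_trans hh' hj.
Qed.

Lemma Gn_ge g : (g <= Gn (hh g))%nat.
Proof.
apply: leq_bigmax_seq => //.
by rewrite mem_iota add0n ltnS /hh leq_addl.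
Qed.

Lemma nat_term_le (f : nat -> nat) N n : (n < N)%nat -> (f n <= \sum_(0 <= i < N) f i)%nat.
Proof.
move=> hn; rewrite (big_cat_nat _ (n := n)) //=; last exact: ltnW.
rewrite (big_ltn hn); lia.
Qed.

Lemma D_upper n (x y : gV (Cv n)) : (#|Dset x y| <= gdist x y)%nat.
Proof. exact: (Dset_ball (hT n) (gdist_ball (cover_connect (hT n) x y))). Qed.

Lemma D_lower n (x y : gV (Cv n)) : (Gn (gdist x y) <= #|Dset x y|)%nat.
Proof.
apply/bigmax_leqP_seq => g; rewrite mem_iota add0n ltnS => hg hhg.
case: (posnP g) => [-> //|gpos].
have hn : (Nm g <= n)%nat.
  rewrite leqNgt; apply/negP => hlt.
  have h1 := nat_term_le dm hlt.
  have h2 : (gdist x y <= dm n)%nat := gdist_diam x y.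
  move: hhg; rewrite /hh; lia.
have hgir := Ng_spec (leq_trans (Nm_ge g) hn).
rewrite leqNgt; apply/negP => hlt.
have := gdist_le (key_ball hm (hT n) hgir erefl hlt); lia.
Qed.


Lemma hfar : forall M, exists N, forall n k (a : gV (Cv n)) (b : gV (Cv k)),
      n <> k -> (N <= n + k)%nat -> M <= d (existT _ n a) (existT _ k b).
Proof. by case: hd => _ [_ [_ h]]. Qed.

Definition Nsep j : nat := proj1_sig (constructive_indefinite_description _ (hfar (INR j))).
Lemma Nsep_spec j n k (a : gV (Cv n)) (b : gV (Cv k)) : n <> k -> (Nsep j <= n + k)%nat ->
  INR j <= d (existT _ n a) (existT _ k b).
Proof. exact: (proj2_sig (constructive_indefinite_description _ (hfar (INR j)))). Qed.

Definition Nm' j : nat := (\max_(i < j.+1) Nsep i)%nat.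
Lemma Nm'_ge j : (Nsep j <= Nm' j)%nat.
Proof. exact: (leq_bigmax (F := fun i : 'I_j.+1 => Nsep i) ord_max). Qed.
Lemma Nm'_mono j j' : (j <= j')%nat -> (Nm' j <= Nm' j')%nat.
Proof.
move=> hj; have hj' : (j.+1 <= j'.+1)%nat by rewrite ltnS.
apply/bigmax_leqP => i _.
exact: (leq_bigmax (F := fun i : 'I_j'.+1 => Nsep i) (widen_ord hj' i)).
Qed.

Let bt n := @beta m X T x0 d n.

Lemma dnn : forall a b, 0 <= d a b.
Proof. by case: hd => [[h _] _]. Qed.
Lemma dsym : forall a b, d a b = d b a.
Proof. by case: hd => [[_ [_ [h _]]] _]. Qed.
Lemma dtri : forall a b c, d a c <= d a b + d b c.
Proof. by case: hd => [[_ [_ [_ h]]] _]. Qed.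
Lemma dcomp : forall n (a b : gV (Cv n)), d (existT _ n a) (existT _ n b) = INR (gdist a b).
Proof. by case: hd => _ [h _]. Qed.

Lemma bt_ge0 n : 0 <= bt n.
Proof. rewrite /bt /beta; apply: Rplus_le_le_0_compat; [apply: dnn | apply: pos_INR]. Qed.

Definition Pb N : R := \big[Rplus/0]_(0 <= i < N) (2 * INR (dm i) + bt i).

Lemma Pb_ge0 N : 0 <= Pb N.
Proof. apply: sum_ge0 => i _; have := pos_INR (dm i); have := bt_ge0 i; lra. Qed.

Lemma Pb_mono N N' : (N <= N')%nat -> Pb N <= Pb N'.
Proof.
move=> h; rewrite /Pb (big_cat_natR (n := N) (m := 0) (p := N')) //.
have : 0 <= \big[Rplus/0]_(N <= i < N') (2 * INR (dm i) + bt i).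
  apply: sum_ge0 => i _; have := pos_INR (dm i); have := bt_ge0 i; lra.
lra.
Qed.

Lemma Pb_term n N : (n < N)%nat -> 2 * INR (dm n) + bt n <= Pb N.
Proof.
move=> hn; apply: Rle_trans (Pb_mono hn); rewrite /Pb big_nat_recrR //.
have := Pb_ge0 n; rewrite /Pb; lra.
Qed.

Definition rm (t : R) : R := sqrt (INR (Gn (fl t))).
Definition rp (t : R) : R := sqrt (2 * t + 2 * Pb (Nm' (jc t))).

Lemma sqrt_ge_M M t : M * M <= t -> M <= sqrt t.
Proof.
move=> h; apply: Rle_trans (Rle_abs M) _.
rewrite -sqrt_Rsqr_abs; apply: sqrt_le_1_alt; rewrite /Rsqr; lra.
Qed.

Lemma final_emb : coarse_embeds_l2 d.
Proof.
exists (@Fe m X T x0 d), rm, rp.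
split; first exact: Fe_l2.
split; first by move=> t _; split; apply: sqrt_pos.
split.
  move=> s t hs hst; apply: sqrt_le_1_alt; apply: le_INR; apply/leP.
  by apply: Gn_mono; apply: fl_mono.
split.
  move=> s t hs hst; apply: sqrt_le_1_alt.
  have := Pb_mono (Nm'_mono (jc_mono hst)); lra.
split.
  move=> M.
  have [g hg] : exists g : nat, M * M <= INR g.
    have [g hg] := INR_archimed 1 (M * M) Rlt_0_1; exists g; lra.
  exists (INR (hh g)) => t ht.
  apply: sqrt_ge_M; apply: Rle_trans hg _; apply: le_INR; apply/leP.
  apply: leq_trans (Gn_ge g) _; apply: Gn_mono.
  by rewrite -{1}(fl_INR (hh g)); apply: fl_mono.
split.
  move=> M; exists (M * M) => t ht; apply: sqrt_ge_M.
  have := Pb_ge0 (Nm' (jc t)); have := Rle_0_sqr M; rewrite /Rsqr; lra.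
move=> [n x] [k y].
case: (eqVneq n k) => [hnk|hnk].
  subst k.
  exists (sqrt (2 * INR #|Dset x y|)); split; first exact: dist_same.
  rewrite dcomp /rm /rp fl_INR; split; apply: sqrt_le_1_alt.
    have := le_INR _ _ (leP (D_lower x y)); have := pos_INR #|Dset x y|; lra.
  have := le_INR _ _ (leP (D_upper x y)); have := Pb_ge0 (Nm' (jc (INR (gdist x y)))); lra.
exists (sqrt ((2 * INR #|Dset x (x0 n)| + bt n) + (2 * INR #|Dset y (x0 k)| + bt k))).
split; first exact: (dist_diff x y hnk (bt_ge0 n) (bt_ge0 k)).
set t := d _ _.
have ht0 : 0 <= t by apply: dnn.
have hdn : INR #|Dset x (x0 n)| <= INR (dm n).
  apply: le_INR; apply/leP; apply: leq_trans (D_upper x (x0 n)) (gdist_diam _ _).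
have hdk : INR #|Dset y (x0 k)| <= INR (dm k).
  apply: le_INR; apply/leP; apply: leq_trans (D_upper y (x0 k)) (gdist_diam _ _).
have hD1 := pos_INR #|Dset x (x0 n)|.
have hD2 := pos_INR #|Dset y (x0 k)|.
split; apply: sqrt_le_1_alt.
  have h1 : INR (Gn (fl t)) <= t.
    apply: Rle_trans (fl_le ht0); apply: le_INR; apply/leP; exact: Gn_le.
  have h2 : t <= bt n + bt k.
    rewrite /t /bt /beta.
    have e1 := dtri (existT _ n x) (bpt x0 n) (existT _ k y).
    have e2 := dtri (bpt x0 n) (bpt x0 0) (existT _ k y).
    have e3 := dtri (bpt x0 0) (bpt x0 k) (existT _ k y).
    have e4 : d (existT _ n x) (bpt x0 n) <= INR (dm n).
      rewrite /bpt dcomp; apply: le_INR; apply/leP; exact: gdist_diam.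
    have e5 : d (bpt x0 k) (existT _ k y) <= INR (dm k).
      rewrite /bpt dcomp; apply: le_INR; apply/leP; exact: gdist_diam.
    have e6 := dsym (bpt x0 0) (bpt x0 k).
    rewrite /dm /diam in e4 e5 |- *; lra.
  lra.
have hsep : (n + k < Nsep (jc t))%nat.
  rewrite ltnNge; apply/negP => hge.
  have := @Nsep_spec (jc t) n k x y (elimN eqP hnk) hge; rewrite -/t.
  have := jc_gt ht0; lra.
have hNn : (n < Nm' (jc t))%nat by have := Nm'_ge (jc t); lia.
have hNk : (k < Nm' (jc t))%nat by have := Nm'_ge (jc t); lia.
have := Pb_term hNn; have := Pb_term hNk; lra.
Qed.

End Final.

End Part4.
Import Part4.

From Stdlib Require Import ClassicalEpsilon.

Theorem mainTheorem2 (m : nat) (hm : (3 <= m)%N) (X : nat -> graph)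
  (hconn : forall n, connected (X n))
  (h2conn : forall n, two_connected (X n))
  (htrees : forall n, exists c : nat, forall e : gE (X n), n_trees_avoiding e = c)
  (hgirth : forall g : nat, exists N : nat, forall n, (N <= n)%N -> girth_ge (X n) g)
  (T : forall n, {set gE (X n)})
  (hT : forall n, spanning_tree (T n))
  (d : {n : nat & gV (homology_cover m (T n))} ->
       {n : nat & gV (homology_cover m (T n))} -> R)
  (hd : @coarse_disjoint_union_metric (fun n => homology_cover m (T n)) d) :
  coarse_embeds_l2 d.
Proof.
have ex_v : forall n, exists v : gV (X n), True.
  move=> n; case: (hconn n) => h _; case/card_gt0P: h => v _; by exists v.
pose x0 := fun n => ((proj1_sig (constructive_indefinite_description _ (ex_v n)),
   GRing.zero) : gV (homology_cover m (T n))).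
exact: (final_emb x0 hm hgirth hT hd).
Qed.
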